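(* Let $1\leq i<j\leq n$ and let $\sigma\in\mathfrak{S}_n$ be such that the letter $i$ is immediately followed by the letter $j$ in the word $\sigma(1)\cdots\sigma(n)$. Let $\tau=(ij)\circ\sigma$, i.e. the permutation whose word is obtained by exchanging these two consecutive letters $i,j$ (other letters unchanged). Then $E(\Psi_n(\tau))=E(\Psi_n(\sigma))\setminus\{(i,j)\}$.
   Context: For $\sigma\in\mathfrak{S}_n$, $\Psi_n(\sigma)$ is the double poset on $\{1,\ldots,n\}$ with $a\leq_h b$ iff ($a\leq b$ and $\sigma^{-1}(a)\leq\sigma^{-1}(b)$), and $a\leq_r b$ iff ($a\leq b$ and $\sigma^{-1}(a)\geq\sigma^{-1}(b)$). For a double poset $P$, $E(P)=\{(a,b)\in P^2\mid a<_h b\}$. *)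

(* Defs.v *)
From mathcomp Require Import all_boot all_fingroup.
Set Implicit Arguments. Unset Strict Implicit. Unset Printing Implicit Defensive.

(* Letters {1..n} are modelled by 'I_n = {0..n-1} (shift by one); the word of
   sigma is sigma(0) ... sigma(n-1), i.e. position p carries letter sigma p. *)

Definition le_h n (s : 'S_n) (a b : 'I_n) : bool :=
  (a <= b) && ((s^-1)%g a <= (s^-1)%g b).
Definition le_r n (s : 'S_n) (a b : 'I_n) : bool :=
  (a <= b) && ((s^-1)%g b <= (s^-1)%g a).
Definition lt_h n (s : 'S_n) (a b : 'I_n) : bool := (a != b) && le_h s a b.

Definition Eset n (s : 'S_n) : {set 'I_n * 'I_n} :=
  [set ab | lt_h s ab.1 ab.2].

(* Main.v *)
Require Import Defs.
From mathcomp Require Import all_boot all_fingroup.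
From mathcomp Require Import zify.

Theorem lemma12 (n : nat) (i j : 'I_n) (sigma : 'S_n) :
  i < j ->
  (exists p q : 'I_n, [/\ q = p.+1 :> nat, sigma p = i & sigma q = j]) ->
  Eset (sigma * tperm i j)%g = Eset sigma :\ (i, j).
Proof.
move=> ltij [p [q [Hq Hp Hqj]]].
have fi : (sigma^-1)%g i = p by rewrite -Hp permK.
have fj : (sigma^-1)%g j = q by rewrite -Hqj permK.
have Hg c : ((sigma * tperm i j)^-1)%g c = (sigma^-1)%g (tperm i j c).
  by rewrite invMg tpermV permM.
have nij : i != j by rewrite neq_ltn ltij.
have key c : [\/ [/\ c = i, nat_of_ord ((sigma^-1)%g c) = p
                  & nat_of_ord (((sigma * tperm i j)^-1)%g c) = q],
                 [/\ c = j, nat_of_ord ((sigma^-1)%g c) = q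
                  & nat_of_ord (((sigma * tperm i j)^-1)%g c) = p] |
                 [/\ c != i, c != j, nat_of_ord ((sigma^-1)%g c) != p,
                     nat_of_ord ((sigma^-1)%g c) != q
                  & ((sigma * tperm i j)^-1)%g c = (sigma^-1)%g c]].
  rewrite Hg.
  case: (eqVneq c i) => [->|ci]; first by apply: Or31; rewrite fi tpermL fj.
  case: (eqVneq c j) => [->|cj]; first by apply: Or32; rewrite fj tpermR fi.
  apply: Or33; rewrite tpermD 1?eq_sym //; split => //.
    apply/negP => /eqP/val_inj E; move: ci; by rewrite -fi in E; rewrite (perm_inj E) eqxx.
  apply/negP => /eqP/val_inj E; move: cj; by rewrite -fj in E; rewrite (perm_inj E) eqxx.
apply/setP => [[a b]]; rewrite !inE /lt_h /le_h /= xpair_eqE.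
have ilj : (nat_of_ord i < nat_of_ord j)%N by [].
case: (key a) => [[-> Ea Ga]|[-> Ea Ga]|[ai aj Ea1 Ea2 Ga]];
case: (key b) => [[-> Eb Gb]|[-> Eb Gb]|[bi bj Eb1 Eb2 Gb]];
rewrite ?Ea ?Eb ?Ga ?Gb ?eqxx ?(negbTE nij) ?(eq_sym j i) ?(negbTE nij) ?(negbTE ai) ?(negbTE aj) ?(negbTE bi) ?(negbTE bj) /=;
try lia.
Qed.
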